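(* Let $G$ be a connected weighted multigraph on the vertex set $V$, $|V|=n\ge2$, with positive edge weights, weighted adjacency matrix $A$ and Perron vector $p$. Let $p'=\sqrt n\,p/\|p\|_2$ and $P'=\operatorname{diag}p'$, and let $G'$ be the weighted graph on $V$ whose weighted adjacency matrix is $P'AP'$. Then for all $i,j\in V$, the long walk distance $d^{LW}(i,j)$ in $G$ equals the resistance distance between $i$ and $j$ in $G'$.
   Context: Loops and multiple edges are allowed; $A=(a_{ij})$ has $a_{ij}$ equal to the sum of weights of the edges joining $i$ and $j$. $\rho$ is the spectral radius of $A$ and the Perron vector $p$ is the positive eigenvector of $A$ for $\rho$ with entries summing to 1. The long walk distance is $d^{LW}(i,j)=\lim_{\alpha\to\infty}\theta\bigl(\tfrac12(\ln r_{ii}+\ln r_{jj})-\ln r_{ij}\bigr)$, where $(r_{ij})=(I-tA)^{-1}$, $t=(\rho+\alpha^{-1})^{-1}$, $\theta=\ln(e+\alpha^{2/n})\frac{\alpha-1}{\ln\alpha}$. For a graph with weighted adjacency matrix $B$, the Laplacian is $L=\operatorname{diag}(B\mathbf 1)-B$ and the resistance distance is $(e_i-e_j)^{\mathsf T}L^{+}(e_i-e_j)$, $L^+$ the Moore–Penrose inverse. *)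

(* Defs.v *)
From HB Require Import structures.
From mathcomp Require Import all_boot all_order all_algebra.
From mathcomp Require Import all_classical all_reals all_analysis.
From mathcomp Require Import complex.
Set Implicit Arguments. Unset Strict Implicit. Unset Printing Implicit Defensive.
Import Order.TTheory GRing.Theory Num.Theory.
Local Open Scope ring_scope.
Local Open Scope complex_scope.

Section Defs.
Variable R : realType.

(* A is the weighted adjacency matrix of a weighted multigraph with positive
   edge weights (loops allowed): symmetric with nonnegative entries. *)
Definition weighted_adjacency (n : nat) (A : 'M[R]_n) : Prop :=
  A^T = A /\ (forall i j, 0 <= A i j).

Definition adj_rel (n : nat) (A : 'M[R]_n) : rel 'I_n :=
  fun i j => (i != j) && (0 < A i j).

Definition connected_graph (n : nat) (A : 'M[R]_n) : Prop :=
  forall i j : 'I_n, connect (adj_rel A) i j.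

Definition is_spectral_radius (n : nat) (A : 'M[R]_n) (rho : R) : Prop :=
  (exists z : R[i], root (map_poly (fun x : R => x%:C) (char_poly A)) z
                    /\ `|z| = rho%:C)
  /\ (forall z : R[i], root (map_poly (fun x : R => x%:C) (char_poly A)) z ->
                       `|z| <= rho%:C).

Definition is_perron_vector (n : nat) (A : 'M[R]_n) (rho : R) (p : 'cV[R]_n)
  : Prop :=
  A *m p = rho *: p /\ (forall i, 0 < p i ord0) /\ \sum_i p i ord0 = 1.

Definition resolvent (n : nat) (A : 'M[R]_n) (rho alpha : R) : 'M[R]_n :=
  invmx (1%:M - (rho + alpha^-1)^-1 *: A).

Definition theta (n : nat) (alpha : R) : R :=
  ln (expR 1 + alpha `^ (2 / n%:R)) * ((alpha - 1) / ln alpha).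

(* the expression whose limit as alpha -> +oo is the long walk distance *)
Definition lw_expr (n : nat) (A : 'M[R]_n) (rho : R) (i j : 'I_n) (alpha : R)
  : R :=
  let r := resolvent A rho alpha in
  theta n alpha * (2^-1 * (ln (r i i) + ln (r j j)) - ln (r i j)).

Definition is_moore_penrose (n : nat) (L X : 'M[R]_n) : Prop :=
  [/\ L *m X *m L = L, X *m L *m X = X, (L *m X)^T = L *m X
    & (X *m L)^T = X *m L].

Definition mp_inverse (n : nat) (L : 'M[R]_n) : 'M[R]_n :=
  xget 0 [set X | is_moore_penrose L X].

Definition laplacian (n : nat) (B : 'M[R]_n) : 'M[R]_n :=
  diag_mx (\row_i \sum_j B i j) - B.

Definition resistance_distance (n : nat) (B : 'M[R]_n) (i j : 'I_n) : R :=
  let e := (delta_mx i ord0 - delta_mx j ord0 : 'cV[R]_n) in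
  (e^T *m mp_inverse (laplacian B) *m e) ord0 ord0.

Definition normalized_perron (n : nat) (p : 'cV[R]_n) : 'cV[R]_n :=
  (Num.sqrt n%:R / Num.sqrt (\sum_i p i ord0 ^+ 2)) *: p.

Definition reweighted_adjacency (n : nat) (A : 'M[R]_n) (p : 'cV[R]_n)
  : 'M[R]_n :=
  let P' := diag_mx (normalized_perron p)^T in P' *m A *m P'.

End Defs.

(* Main.v *)
Require Import Defs.
From HB Require Import structures.
From mathcomp Require Import all_boot all_order all_algebra.
From mathcomp Require Import all_classical all_reals all_analysis.
From mathcomp Require Import complex.
From mathcomp Require Import ring lra.
Import Order.TTheory GRing.Theory Num.Theory numFieldNormedType.Exports.
Set Implicit Arguments. Unset Strict Implicit. Unset Printing Implicit Defensive.
Local Open Scope classical_set_scope.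
Local Open Scope ring_scope.

Section Ana.
Variable R : realType.

Lemma ln1x_bound (x : R) : `|x| <= 2^-1 -> `|ln (1 + x) - x| <= 2 * x ^+ 2.
Proof.
move=> hx; have [hx1 hx2] : - 2^-1 <= x /\ x <= 2^-1.
  by split; [rewrite lerNl; apply: le_trans hx; rewrite -normrN ler_norm | apply: le_trans hx; rewrite ler_norm].
have x1 : -1 < x by lra.
have p1 : 0 < 1 + x by lra.
have up := le_ln1Dx x1.
have lo : 1 - (1 + x)^-1 <= ln (1 + x).
  have h : -1 < (1 + x)^-1 - 1.
    by rewrite ltrBrDr addNr invr_gt0.
  have := le_ln1Dx h; rewrite addrC subrK lnV ?posrE // => h2.
  lra.
have e1 : 1 - (1 + x)^-1 = x / (1 + x) by field; rewrite gt_eqF.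
rewrite e1 in lo.
rewrite ler0_norm ?subr_le0 // opprB.
have : x - x / (1 + x) <= 2 * x ^+ 2.
  have -> : x - x / (1 + x) = x ^+ 2 / (1 + x) by field; rewrite gt_eqF.
  rewrite ler_pdivrMr // ; nra.
lra.
Qed.

Lemma cvg_inv_bound (f : R -> R) (l C M : R) :
  (forall x, M < x -> `|f x - l| <= C / x) -> f x @[x --> +oo] --> l.
Proof.
move=> hb; apply/cvgrPdistC_le => eps he.
near=> x.
have hM : M < x by near: x; apply: nbhs_pinfty_gt; exact: num_real.
have h0 : 0 < x by near: x; apply: nbhs_pinfty_gt; exact: num_real.
have hC : `|C| / eps < x by near: x; apply: nbhs_pinfty_gt; exact: num_real.
apply: le_trans (hb _ hM) _.
rewrite ler_pdivrMr //; apply: le_trans (ler_norm C) _.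
by rewrite ltr_pdivrMr // in hC; rewrite mulrC ltW.
Unshelve. all: end_near. Qed.

Lemma cvg_invln_bound (f : R -> R) (l C M : R) :
  (forall x, M < x -> `|f x - l| <= C / ln x) -> f x @[x --> +oo] --> l.
Proof.
move=> hb; apply/cvgrPdistC_le => eps he.
near=> x.
have hM : M < x by near: x; apply: nbhs_pinfty_gt; exact: num_real.
have h1 : 1 < x by near: x; apply: nbhs_pinfty_gt; exact: num_real.
have hC : expR (`|C| / eps) < x by near: x; apply: nbhs_pinfty_gt; exact: num_real.
have lx : 0 < ln x by exact: ln_gt0.
have hC2 : `|C| / eps < ln x.
  by rewrite -ltr_expR lnK // posrE; lra.
apply: le_trans (hb _ hM) _.
rewrite ler_pdivrMr //; apply: le_trans (ler_norm C) _.
by rewrite ltr_pdivrMr // in hC2; rewrite mulrC ltW.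
Unshelve. all: end_near. Qed.


Lemma theta_lim (n : nat) : (0 < n)%N ->
  (theta n alpha / alpha) @[alpha --> +oo] --> (2 / n%:R : R).
Proof.
move=> n0; set c := 2 / n%:R.
have c0 : 0 < c by rewrite /c divr_gt0 // ltr0n.
apply: (@cvg_invln_bound _ _ (expR 1 + c) 1) => a a1.
have a0 : 0 < a by lra.
set L := ln a.
have L0 : 0 < L by exact: ln_gt0.
have La : L < a by exact: ln_sublinear.
set u := a `^ c.
have uE : u = expR (c * L) by rewrite /u /powR gt_eqF.
have u1 : 1 <= u.
  rewrite uE; apply: le_trans (expR_ge1Dx _); rewrite lerDl mulr_ge0 // ltW //.
have u0 : 0 < u by lra.
have lnu : ln u = c * L by rewrite uE expRK.
set E := expR 1.
have E0 : 0 < E by exact: expR_gt0.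
have eu : E + u = u * (1 + E / u) by field; rewrite gt_eqF.
set R1 := ln (1 + E / u).
have Eu0 : 0 <= E / u by rewrite divr_ge0 // ltW.
have R1ge : 0 <= R1 by rewrite /R1 ln_ge0 // lerDl.
have R1le : R1 <= E.
  apply: le_trans (le_ln1Dx _) _; first lra.
  by rewrite ler_pdivrMr // ler_peMr // ltW.
have lnEu : ln (E + u) = c * L + R1.
  by rewrite eu lnM ?posrE // ?lnu //; lra.
have -> : theta n a / a - c = R1 * ((a - 1) / a) / L - c / a.
  rewrite /theta -/E -/u lnEu -/L -/c; field.
  by rewrite !gt_eqF.
set q := (a - 1) / a.
have q0 : 0 <= q by rewrite /q divr_ge0; lra.
have q1 : q <= 1 by rewrite /q ler_pdivrMr //; lra.
have t1 : 0 <= R1 * q / L by apply: divr_ge0; [apply: mulr_ge0|apply: ltW].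
have t2 : R1 * q / L <= E / L by rewrite ler_pM2r ?invr_gt0 //; nra.
have t3 : 0 <= c / a by apply: divr_ge0; apply: ltW.
have t4 : c / a <= c / L by rewrite ler_pM2l // lef_pV2 ?posrE // ltW.
have -> : (E + c) / L = E / L + c / L by rewrite mulrDl.
rewrite ler_norml; apply/andP; split; lra.
Qed.

Lemma term_bound (a : R -> R) (a0 C M : R) : 0 <= C ->
  (forall x, M < x -> `|a x - a0| <= C / x) ->
  exists M', forall x, M' < x -> 0 < 1 + a x / x /\ `|x * ln (1 + a x / x) - a0| <= (2 * (`|a0| + C) ^+ 2 + C) / x.
Proof.
move=> C0 hb; exists (Num.max M (Num.max 1 (2 * (`|a0| + C)))) => x.
rewrite !gt_max => /and3P [xM x1 x2].
have x0 : 0 < x by lra.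
have h := hb _ xM.
have Cx : C / x <= C by rewrite ler_pdivrMr //; nra.
have ha : `|a x| <= `|a0| + C.
  have : `|a x| <= `|a0| + `|a x - a0|.
    by rewrite -[X in `|X|](subrK a0) addrC; apply: le_trans (ler_normD _ _) _; rewrite addrC.
  lra.
set y := a x / x.
have hy : `|y| <= 2^-1.
  have -> : `|y| = `|a x| / x by rewrite /y normrM normfV (gtr0_norm x0).
  rewrite ler_pdivrMr //; lra.
have [hy1 hy2] : - 2^-1 <= y /\ y <= 2^-1.
  by split; [rewrite lerNl; apply: le_trans hy; rewrite -normrN ler_norm | apply: le_trans hy; rewrite ler_norm].
split; first lra.
have hl := ln1x_bound hy.
have xy : x * y = a x by rewrite /y mulrC divfK // gt_eqF.
have -> : x * ln (1 + y) - a0 = x * (ln (1 + y) - y) + (a x - a0).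
  by rewrite mulrBr xy; ring.
apply: le_trans (ler_normD _ _) _.
rewrite mulrDl; apply: lerD => //.
rewrite normrM (gtr0_norm x0).
apply: le_trans (ler_wpM2l (ltW x0) hl) _.
have -> : x * (2 * y ^+ 2) = 2 * (a x) ^+ 2 / x.
  by rewrite -xy; field; rewrite gt_eqF.
rewrite ler_pM2r ?invr_gt0 // ler_pM2l //.
rewrite -(real_normK (num_real (a x))); have := normr_ge0 (a x); nra.
Qed.

End Ana.

Section Alg.
Variable R : realType.
Variable n : nat.
Variable A : 'M[R]_n.
Variable rho : R.
Variable p : 'cV[R]_n.
Hypothesis hsym : A^T = A.
Hypothesis hnn : forall i j, 0 <= A i j.
Hypothesis hAp : A *m p = rho *: p.
Hypothesis hpos : forall i, 0 < p i ord0.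
Hypothesis hconn : connected_graph A.

Definition qf (M : 'M[R]_n) (v : 'rV[R]_n) : R := (v *m M *m v^T) ord0 ord0.

Lemma qf_expand M v : qf M v = \sum_i \sum_j v ord0 i * M i j * v ord0 j.
Proof.
rewrite /qf mxE exchange_big /=; apply: eq_bigr => j _.
by rewrite !mxE big_distrl /=.
Qed.

Lemma Asym i j : A i j = A j i.
Proof. by rewrite -{1}hsym mxE. Qed.

Lemma rowsum i : \sum_j A i j * p j ord0 = rho * p i ord0.
Proof.
have := congr1 (fun M : 'cV[R]_n => M i ord0) hAp; rewrite !mxE => ->.
by [].
Qed.

Definition K : 'M[R]_n := rho%:M - A.

Lemma KE i j : K i j = rho *+ (i == j) - A i j.
Proof. by rewrite /K !mxE. Qed.

Lemma qfK v : qf K v = 2^-1 * \sum_i \sum_j A i j * p i ord0 * p j ord0 *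
   (v ord0 i / p i ord0 - v ord0 j / p j ord0) ^+ 2.
Proof.
set x := fun k => v ord0 k / p k ord0.
have vx k : v ord0 k = x k * p k ord0.
  by rewrite /x divfK // gt_eqF.
have T1 : \sum_i \sum_j A i j * p i ord0 * p j ord0 * x i ^+ 2
          = rho * \sum_i v ord0 i ^+ 2.
  rewrite mulr_sumr; apply: eq_bigr => i _.
  transitivity (p i ord0 * x i ^+ 2 * \sum_j A i j * p j ord0).
    rewrite mulr_sumr; apply: eq_bigr => j _; ring.
  by rewrite rowsum vx; ring.
have T2 : \sum_i \sum_j A i j * p i ord0 * p j ord0 * x j ^+ 2
          = rho * \sum_i v ord0 i ^+ 2.
  rewrite exchange_big /= -T1; apply: eq_bigr => i _; apply: eq_bigr => j _.
  by rewrite (Asym j i); ring.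
have T3 : \sum_i \sum_j A i j * p i ord0 * p j ord0 * (x i * x j)
          = \sum_i \sum_j v ord0 i * A i j * v ord0 j.
  by apply: eq_bigr => i _; apply: eq_bigr => j _; rewrite !vx; ring.
have E : \sum_i \sum_j A i j * p i ord0 * p j ord0 * (x i - x j) ^+ 2 =
  \sum_i \sum_j A i j * p i ord0 * p j ord0 * x i ^+ 2 +
  \sum_i \sum_j A i j * p i ord0 * p j ord0 * x j ^+ 2 -
  2 * \sum_i \sum_j A i j * p i ord0 * p j ord0 * (x i * x j).
  rewrite mulr_sumr -!big_split /= -sumrB; apply: eq_bigr => i _.
  rewrite mulr_sumr -!big_split /= -sumrB; apply: eq_bigr => j _; ring.
rewrite E T1 T2 T3 qf_expand.
have -> : \sum_i \sum_j v ord0 i * K i j * v ord0 j =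
   rho * \sum_i v ord0 i ^+ 2 - \sum_i \sum_j v ord0 i * A i j * v ord0 j.
  rewrite mulr_sumr -sumrB; apply: eq_bigr => i _.
  have -> : \sum_j v ord0 i * K i j * v ord0 j = \sum_j (v ord0 i * (rho *+ (i == j)) * v ord0 j)
     - \sum_j v ord0 i * A i j * v ord0 j.
    by rewrite -sumrB; apply: eq_bigr => j _; rewrite KE; ring.
  congr (_ - _); rewrite (bigD1 i) //= eqxx mulr1n big1 ?addr0; first ring.
  by move=> j /negPf nij; rewrite eq_sym nij mulr0n; ring.
by field.
Qed.

Lemma qfK_ge0 v : 0 <= qf K v.
Proof.
rewrite qfK mulr_ge0 // ?invr_ge0 ?ler0n //.
apply: sumr_ge0 => i _; apply: sumr_ge0 => j _.
by rewrite mulr_ge0 ?sqr_ge0 // !mulr_ge0 // ltW.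
Qed.

Lemma propagate (f : 'I_n -> R) :
  (forall i j, adj_rel A i j -> f i = f j) -> forall i j, f i = f j.
Proof.
move=> H i j; have /connectP [s ps ->] := hconn i j.
elim: s i ps => [|k s IH] i //= /andP [aik ps].
by rewrite (H _ _ aik); exact: IH.
Qed.

Lemma qfK0 v : qf K v = 0 -> forall i j, v ord0 i / p i ord0 = v ord0 j / p j ord0.
Proof.
move=> q0; apply: propagate => i j /andP [_ aij].
move: q0; rewrite qfK => /eqP; rewrite mulf_eq0 invr_eq0 pnatr_eq0 /= => /eqP q0.
have h1 : forall i, \sum_j A i j * p i ord0 * p j ord0 *
   (v ord0 i / p i ord0 - v ord0 j / p j ord0) ^+ 2 = 0.
  have nn : forall k, predT k -> 0 <= \sum_l A k l * p k ord0 * p l ord0 *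
     (v ord0 k / p k ord0 - v ord0 l / p l ord0) ^+ 2.
    move=> k _; apply: sumr_ge0 => l _.
    by rewrite mulr_ge0 ?sqr_ge0 // !mulr_ge0 // ltW.
  by move=> k; exact: (psumr_eq0P nn q0).
have nn2 : forall l, predT l -> 0 <= A i l * p i ord0 * p l ord0 *
     (v ord0 i / p i ord0 - v ord0 l / p l ord0) ^+ 2.
  by move=> l _; rewrite mulr_ge0 ?sqr_ge0 // !mulr_ge0 // ltW.
have := psumr_eq0P nn2 (h1 i) (i := j) isT.
move=> /eqP; rewrite !mulf_eq0 (gt_eqF aij) (gt_eqF (hpos i)) (gt_eqF (hpos j)) /=. rewrite orbb subr_eq0 => /eqP -> //.
Qed.

Lemma unit_of_ker (M : 'M[R]_n) :
  (forall v : 'rV[R]_n, v *m M = 0 -> v = 0) -> M \in unitmx.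
Proof.
move=> H; rewrite unitmxE unitfE; apply/negP => /det0P [v nz vM].
by rewrite (H v vM) eqxx in nz.
Qed.

Lemma qfD M1 M2 v : qf (M1 + M2) v = qf M1 v + qf M2 v.
Proof. by rewrite /qf mulmxDr mulmxDl mxE. Qed.

Lemma qfZ c M v : qf (c *: M) v = c * qf M v.
Proof. by rewrite /qf -scalemxAr -scalemxAl mxE. Qed.

Lemma qf1 v : qf 1%:M v = \sum_i v ord0 i ^+ 2.
Proof.
rewrite /qf mulmx1 mxE; apply: eq_bigr => i _; by rewrite mxE.
Qed.

Lemma qfW v : qf (p *m p^T) v = ((v *m p) ord0 ord0) ^+ 2.
Proof.
rewrite /qf (_ : v *m (p *m p^T) *m v^T = (v *m p) *m (v *m p)^T); last by rewrite trmx_mul !mulmxA.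
by rewrite mxE big_ord1 !mxE expr2.
Qed.

Lemma qf_ker M v : v *m M = 0 -> qf M v = 0.
Proof. by move=> h; rewrite /qf h mul0mx mxE. Qed.

Variable i0 : 'I_n.

Definition s : R := \sum_i p i ord0 ^+ 2.

Lemma s_gt0 : 0 < s.
Proof.
rewrite /s (bigD1 i0) //= ltr_pwDl ?exprn_gt0 //.
by apply: sumr_ge0 => i _; rewrite sqr_ge0.
Qed.

Definition W : 'M[R]_n := p *m p^T.
Definition H : 'M[R]_n := K + s^-1 *: W.

Lemma qfK_prop v : qf K v = 0 -> exists c, forall k, v ord0 k = c * p k ord0.
Proof.
move=> /qfK0 h; exists (v ord0 i0 / p i0 ord0) => k.
by rewrite -(h k i0) divfK // gt_eqF.
Qed.

Lemma H_unit : H \in unitmx.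
Proof.
apply: unit_of_ker => v vH; have := qf_ker vH.
rewrite /H qfD qfZ qfW => /eqP; rewrite paddr_eq0 ?qfK_ge0 //; last by rewrite mulr_ge0 ?invr_ge0 ?sqr_ge0 // (ltW s_gt0).
rewrite mulf_eq0 invr_eq0 (gt_eqF s_gt0) /= sqrf_eq0 => /andP [/eqP /qfK_prop [c hc] /eqP vp].
have c0 : c * s = 0.
  rewrite -vp mxE /s mulr_sumr; apply: eq_bigr => k _; rewrite hc; ring.
move: c0 => /eqP; rewrite mulf_eq0 (gt_eqF s_gt0) orbF => /eqP c0.
apply/matrixP => a k; rewrite ord1 hc c0 mul0r mxE//.
Qed.

Lemma Me_unit e : 0 < e -> K + e%:M \in unitmx.
Proof.
move=> e0; apply: unit_of_ker => v vH; have := qf_ker vH.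
have sg : 0 <= \sum_i v ord0 i ^+ 2 by apply: sumr_ge0 => k _; rewrite sqr_ge0.
rewrite qfD -scalemx1 qfZ qf1 => /eqP; rewrite paddr_eq0 ?qfK_ge0 ?mulr_ge0 ?(ltW e0) //.
rewrite mulf_eq0 (gt_eqF e0) /= => /andP [_ /eqP h].
apply/matrixP => a k; rewrite ord1 mxE.
have nn : forall l, predT l -> 0 <= v ord0 l ^+ 2 by move=> l _; rewrite sqr_ge0.
by have /eqP := psumr_eq0P nn h (i := k) isT; rewrite sqrf_eq0 => /eqP.
Qed.


Lemma Ktr : K^T = K.
Proof. by rewrite /K linearB /= tr_scalar_mx hsym. Qed.

Lemma Kp : K *m p = 0.
Proof. by rewrite /K mulmxBl mul_scalar_mx hAp subrr. Qed.

Lemma pK : p^T *m K = 0.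
Proof. by rewrite -Ktr -trmx_mul Kp trmx0. Qed.

Lemma ptp : p^T *m p = s%:M.
Proof.
apply/matrixP => a b; rewrite !ord1 !mxE /= mulr1n /s.
by apply: eq_bigr => k _; rewrite mxE expr2.
Qed.

Lemma Wp : W *m p = s *: p.
Proof. by rewrite /W -mulmxA ptp mul_mx_scalar. Qed.

Lemma pW : p^T *m W = s *: p^T.
Proof. by rewrite /W mulmxA ptp mul_scalar_mx. Qed.

Lemma Wtr : W^T = W.
Proof. by rewrite /W trmx_mul trmxK. Qed.

Lemma Htr : H^T = H.
Proof. by rewrite /H linearD linearZ /= Ktr Wtr. Qed.

Lemma Hp : H *m p = p.
Proof.
rewrite /H mulmxDl Kp add0r -scalemxAl Wp scalerA mulVf ?scale1r //.
by rewrite (gt_eqF s_gt0).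
Qed.

Definition iH := invmx H.

Lemma iHp : iH *m p = p.
Proof. by rewrite -{1}Hp mulKmx // H_unit. Qed.

Lemma iHtr : iH^T = iH.
Proof. by rewrite /iH trmx_inv Htr. Qed.

Lemma piH : p^T *m iH = p^T.
Proof. by rewrite -iHtr -trmx_mul iHp. Qed.

Definition G := iH - s^-1 *: W.
Definition Pi : 'M[R]_n := 1%:M - s^-1 *: W.

Lemma Gtr : G^T = G.
Proof. by rewrite /G linearB linearZ /= iHtr Wtr. Qed.

Lemma Gp : G *m p = 0.
Proof.
rewrite /G mulmxBl iHp -scalemxAl Wp scalerA mulVf ?scale1r ?subrr //.
by rewrite (gt_eqF s_gt0).
Qed.

Lemma pG : p^T *m G = 0.
Proof. by rewrite -Gtr -trmx_mul Gp trmx0. Qed.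

Lemma WG : W *m G = 0.
Proof. by rewrite /W -mulmxA pG mulmx0. Qed.

Lemma KW : K *m W = 0.
Proof. by rewrite /W mulmxA Kp mul0mx. Qed.

Lemma KG : K *m G = Pi.
Proof.
rewrite /G mulmxBr -scalemxAr KW scaler0 subr0.
have -> : K = H - s^-1 *: W by rewrite /H addrK.
rewrite mulmxBl mulmxV ?H_unit // -scalemxAl.
by rewrite /W -mulmxA piH /Pi.
Qed.

Section Resolvent.
Variable e : R.
Hypothesis e0 : 0 < e.

Definition Me := K + e%:M.
Definition Y := invmx Me.
Definition N := Y - (e * s)^-1 *: W.

Lemma Mep : Me *m p = e *: p.
Proof. by rewrite /Me mulmxDl Kp add0r mul_scalar_mx. Qed.

Lemma Yp : Y *m p = e^-1 *: p.
Proof.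
have h : p = e^-1 *: (Me *m p) by rewrite Mep scalerA mulVf ?gt_eqF // scale1r.
by rewrite {1}h -scalemxAr mulKmx // Me_unit.
Qed.

Lemma GN : G = N + e *: (N *m G).
Proof.
have MeG : Me *m G = Pi + e *: G by rewrite /Me mulmxDl KG mul_scalar_mx.
have e1 : G = Y *m (Me *m G) by rewrite mulKmx // Me_unit.
rewrite {1}e1 MeG mulmxDr -scalemxAr; congr (_ + _ *: _).
  rewrite /Pi /N mulmxBr mulmx1 -scalemxAr /W mulmxA Yp -scalemxAl scalerA.
  by rewrite invfM mulrC.
by rewrite /N mulmxBl -scalemxAl WG scaler0 subr0.
Qed.

End Resolvent.

Definition mn (X : 'M[R]_n) : R := \sum_i \sum_j `|X i j|.

Lemma mn_ge0 (X : 'M[R]_n) : 0 <= mn X.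
Proof. by apply: sumr_ge0 => i _; apply: sumr_ge0 => j _. Qed.

Lemma row_le_mn (X : 'M[R]_n) k : \sum_j `|X k j| <= mn X.
Proof.
rewrite /mn [X in _ <= X](bigD1 k) //= lerDl; apply: sumr_ge0 => i _; apply: sumr_ge0 => j _.
by [].
Qed.

Lemma entry_le_mn (X : 'M[R]_n) k l : `|X k l| <= mn X.
Proof.
apply: le_trans (row_le_mn X k).
by rewrite (bigD1 l) //= lerDl; apply: sumr_ge0 => j _.
Qed.

Lemma mnD (X Z : 'M[R]_n) : mn (X + Z) <= mn X + mn Z.
Proof.
rewrite /mn -big_split /=; apply: ler_sum => i _.
rewrite -big_split /=; apply: ler_sum => j _; rewrite mxE; exact: ler_normD.
Qed.

Lemma mnN (X : 'M[R]_n) : mn (- X) = mn X.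
Proof.
by apply: eq_bigr => i _; apply: eq_bigr => j _; rewrite mxE normrN.
Qed.

Lemma mnZ c (X : 'M[R]_n) : mn (c *: X) = `|c| * mn X.
Proof.
rewrite /mn mulr_sumr; apply: eq_bigr => i _; rewrite mulr_sumr.
by apply: eq_bigr => j _; rewrite mxE normrM.
Qed.

Lemma mnM (X Z : 'M[R]_n) : mn (X *m Z) <= mn X * mn Z.
Proof.
apply: (@le_trans _ _ (\sum_i \sum_k `|X i k| * \sum_j `|Z k j|)).
  apply: ler_sum => i _.
  apply: (@le_trans _ _ (\sum_j \sum_k `|X i k| * `|Z k j|)).
    apply: ler_sum => j _; rewrite mxE; apply: le_trans (ler_norm_sum _ _ _) _.
    by apply: ler_sum => k _; rewrite normrM.
  rewrite exchange_big /=; apply: ler_sum => k _; by rewrite mulr_sumr.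
rewrite /mn mulr_suml; apply: ler_sum => i _; rewrite mulr_suml.
apply: ler_sum => k _; apply: ler_wpM2l => //; exact: row_le_mn.
Qed.

Lemma Nbound e : 0 < e -> e * mn G <= 2^-1 ->
  forall k l, `|N e k l - G k l| <= e * (2 * mn G ^+ 2).
Proof.
move=> e0 he k l.
have eq1 : N e - G = - (e *: (N e *m G)).
  by rewrite {1}(GN e0) opprD addrA subrr add0r.
have b1 : mn (N e) <= mn G + e * (mn (N e) * mn G).
  have e2 : N e = G + - (e *: (N e *m G)) by rewrite -eq1 addrC subrK.
  rewrite {1}e2.
  apply: le_trans (mnD _ _) _; rewrite mnN mnZ (ger0_norm (ltW e0)).
  by rewrite lerD2l ler_wpM2l ?(ltW e0) // mnM.
have mG := mn_ge0 G; have mN := mn_ge0 (N e).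
have b2 : mn (N e) <= 2 * mn G by nra.
have := entry_le_mn (N e - G) k l; rewrite [(N e - G) k l]mxE [(- G) k l]mxE => h.
apply: le_trans h _; rewrite eq1 mnN mnZ (ger0_norm (ltW e0)).
apply: ler_wpM2l; first exact: ltW.
apply: le_trans (mnM _ _) _; rewrite expr2 mulrA; apply: ler_wpM2r => //.
Qed.


Definition ones : 'cV[R]_n := const_mx 1.
Definition D : 'M[R]_n := diag_mx p^T.
Definition Dinv : 'M[R]_n := diag_mx (\row_k (p k ord0)^-1).
Definition J : 'M[R]_n := ones *m ones^T.
Definition P1 : 'M[R]_n := 1%:M - n%:R^-1 *: J.

Lemma n_gt0 : (0 < n)%N.
Proof. exact: leq_ltn_trans (leq0n _) (ltn_ord i0). Qed.

Lemma nR0 : n%:R != 0 :> R.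
Proof. by rewrite pnatr_eq0 -lt0n n_gt0. Qed.

Lemma Dones : D *m ones = p.
Proof. by apply/matrixP => k a; rewrite mul_diag_mx !mxE mulr1 ord1. Qed.

Lemma pDinv : p^T *m Dinv = ones^T.
Proof.
by apply/matrixP => a k; rewrite mul_mx_diag !mxE ord1 mulfV // (gt_eqF (hpos k)).
Qed.

Lemma Dtr : D^T = D.
Proof. exact: tr_diag_mx. Qed.

Lemma onesD : ones^T *m D = p^T.
Proof. by rewrite -Dtr -trmx_mul Dones. Qed.

Lemma Dinvtr : Dinv^T = Dinv.
Proof. exact: tr_diag_mx. Qed.

Lemma DDinv : D *m Dinv = 1%:M.
Proof.
apply/matrixP => k l; rewrite mul_diag_mx !mxE.
by case: eqP => [->|_]; rewrite ?mulr1n ?mulr0n ?mulr0 ?mulfV // (gt_eqF (hpos l)).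
Qed.

Lemma ones_ones : ones^T *m ones = n%:R%:M.
Proof.
apply/matrixP => a b; rewrite !ord1 !mxE /= mulr1n.
under eq_bigr do rewrite !mxE mulr1.
by rewrite sumr_const card_ord.
Qed.

Lemma Jtr : J^T = J.
Proof. by rewrite /J trmx_mul trmxK. Qed.

Lemma P1tr : P1^T = P1.
Proof. by rewrite /P1 linearB linearZ /= Jtr tr_scalar_mx. Qed.

Lemma onesP1 : ones^T *m P1 = 0.
Proof.
rewrite /P1 mulmxBr mulmx1 -scalemxAr /J mulmxA ones_ones mul_scalar_mx.
by rewrite scalerA mulVf ?nR0 // scale1r subrr.
Qed.

Lemma P1P1 : P1 *m P1 = P1.
Proof.
rewrite {1}/P1 mulmxBl mul1mx -scalemxAl /J -mulmxA onesP1 mulmx0 scaler0.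
by rewrite subr0.
Qed.

Lemma KDP1Dinv : K *m D *m P1 *m Dinv = K.
Proof.
rewrite /P1 mulmxBr mulmx1 -scalemxAr mulmxBl -scalemxAl.
rewrite /J !mulmxA -(mulmxA K D ones) Dones Kp mul0mx mul0mx scaler0 subr0.
by rewrite -mulmxA DDinv mulmx1.
Qed.

Definition cc : R := Num.sqrt n%:R / Num.sqrt s.
Definition c2 : R := cc ^+ 2.

Lemma c2E : c2 = n%:R / s.
Proof.
rewrite /c2 /cc exprMn exprVn !sqr_sqrtr ?ler0n //; exact: ltW s_gt0.
Qed.

Lemma c2_gt0 : 0 < c2.
Proof. by rewrite c2E divr_gt0 ?s_gt0 // ltr0n n_gt0. Qed.

Definition Bm := reweighted_adjacency A p.
Definition L := laplacian Bm.

Lemma Bm_entry k l : Bm k l = cc * p k ord0 * A k l * (cc * p l ord0).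
Proof.
by rewrite /Bm /reweighted_adjacency /normalized_perron mul_mx_diag mxE mul_diag_mx !mxE.
Qed.

Lemma L_eq : L = c2 *: (D *m K *m D).
Proof.
apply/matrixP => k l.
have -> : L k l = (\sum_j Bm k j) *+ (k == l) - Bm k l by rewrite /L /laplacian !mxE.
rewrite Bm_entry mul_mx_diag mxE mul_diag_mx !mxE.
have -> : \sum_j Bm k j = c2 * p k ord0 * (rho * p k ord0).
  rewrite -rowsum mulr_sumr; apply: eq_bigr => j _; rewrite Bm_entry /c2; ring.
case: eqP => [->|_]; rewrite ?mulr1n ?mulr0n /c2; ring.
Qed.

Lemma Ltr : L^T = L.
Proof. by rewrite L_eq linearZ /= !trmx_mul Dtr Ktr !mulmxA. Qed.

Definition X : 'M[R]_n := c2^-1 *: (P1 *m Dinv *m G *m Dinv *m P1).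

Lemma Xtr : X^T = X.
Proof.
by rewrite /X linearZ /= !trmx_mul P1tr Dinvtr Gtr !mulmxA.
Qed.

Lemma DPiDinv : D *m Pi *m Dinv = 1%:M - s^-1 *: ((D *m p) *m ones^T).
Proof.
rewrite /Pi (mulmxBr D) mulmx1 -scalemxAr (mulmxBl D) DDinv -scalemxAl.
by rewrite /W mulmxA -(mulmxA _ _ Dinv) pDinv.
Qed.

Lemma LX : L *m X = P1.
Proof.
rewrite L_eq /X -scalemxAl -scalemxAr scalerA mulfV ?gt_eqF ?c2_gt0 // scale1r.
have -> : D *m K *m D *m (P1 *m Dinv *m G *m Dinv *m P1) =
   D *m (K *m D *m P1 *m Dinv) *m G *m Dinv *m P1 by rewrite !mulmxA.
rewrite KDP1Dinv -(mulmxA D) KG DPiDinv mulmxBl mul1mx -scalemxAl -(mulmxA (D *m p)) onesP1.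
by rewrite mulmx0 scaler0 subr0.
Qed.

Lemma XL : X *m L = P1.
Proof. by rewrite -P1tr -LX trmx_mul Ltr Xtr. Qed.

Lemma X_mp : is_moore_penrose L X.
Proof.
split.
- rewrite LX /P1 mulmxBl mul1mx -scalemxAl /J -mulmxA.
  have -> : ones^T *m L = 0.
    by rewrite L_eq -scalemxAr !mulmxA onesD pK mul0mx scaler0.
  by rewrite mulmx0 scaler0 subr0.
- by rewrite -mulmxA LX /X -scalemxAl -(mulmxA _ P1 P1) P1P1.
- by rewrite LX P1tr.
- by rewrite XL P1tr.
Qed.


Definition dl (a : 'I_n) : 'cV[R]_n := delta_mx a ord0.

Lemma quad_delta (M : 'M[R]_n) a b : ((dl a)^T *m M *m dl b) ord0 ord0 = M a b.
Proof. by rewrite /dl trmx_delta -rowE -colE !mxE. Qed.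

Lemma ones_delta a : ones^T *m dl a = 1%:M.
Proof. by rewrite /dl -colE; apply/matrixP => x y; rewrite !ord1 !mxE. Qed.

Lemma mxB0 (U V : 'M[R]_1) : (U - V) ord0 ord0 = U ord0 ord0 - V ord0 ord0.
Proof. by rewrite !mxE. Qed.

Lemma res_eq i j : resistance_distance Bm i j =
  c2^-1 * (G i i / (p i ord0 * p i ord0) - G i j / (p i ord0 * p j ord0)
           - G j i / (p j ord0 * p i ord0) + G j j / (p j ord0 * p j ord0)).
Proof.
rewrite /resistance_distance -/L.
rewrite -[delta_mx i ord0]/(dl i) -[delta_mx j ord0]/(dl j).
set e := dl i - dl j.
have mp : is_moore_penrose L (mp_inverse L) by exact: (xgetI _ X_mp).
case: mp => mp1 _ _ _.
have oe : ones^T *m e = 0 by rewrite /e mulmxBr !ones_delta subrr.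
have P1e : P1 *m e = e.
  by rewrite /P1 mulmxBl mul1mx -scalemxAl /J -mulmxA oe mulmx0 scaler0 subr0.
have eP1 : e^T *m P1 = e^T by rewrite -P1tr -trmx_mul P1e.
have Le : L *m (X *m e) = e by rewrite mulmxA LX P1e.
have -> : e^T *m mp_inverse L *m e = (X *m e)^T *m (L *m mp_inverse L *m L) *m (X *m e).
  transitivity ((L *m (X *m e))^T *m mp_inverse L *m (L *m (X *m e))); first by rewrite Le.
  by rewrite trmx_mul Ltr !mulmxA.
rewrite mp1 -mulmxA Le trmx_mul Xtr /X -scalemxAr -scalemxAl mxE.
rewrite -(mulmxA _ _ e) -!mulmxA P1e !mulmxA eP1.
rewrite (_ : e^T *m Dinv *m G *m Dinv *m e = e^T *m (Dinv *m G *m Dinv) *m e);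
  last by rewrite !mulmxA.
have eT : e^T = (dl i)^T - (dl j)^T by rewrite /e linearB.
rewrite eT /e !mulmxBl !mulmxBr !mxB0 !quad_delta.
congr (_ * _); rewrite /Dinv !mul_diag_mx !mul_mx_diag !mxE !invfM; ring.
Qed.


Lemma rho_ge0 : 0 <= rho.
Proof.
have h := rowsum i0.
have S0 : 0 <= \sum_j A i0 j * p j ord0.
  by apply: sumr_ge0 => j _; rewrite mulr_ge0 // ltW.
have := hpos i0; nra.
Qed.

Definition rr (al : R) := resolvent A rho al.

Lemma rr_mat al : 0 < al -> rr al = (rho + al^-1) *: Y al^-1.
Proof.
move=> al0; set e := al^-1.
have e0 : 0 < e by rewrite invr_gt0.
have re0 : 0 < rho + e by have := rho_ge0; lra.
rewrite /rr /resolvent -/e.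
have -> : 1%:M - (rho + e)^-1 *: A = (rho + e)^-1 *: Me e.
  apply/matrixP => k l; rewrite /Me /K !mxE.
  by case: eqP => _; rewrite ?mulr1n ?mulr0n; field; rewrite gt_eqF.
rewrite invmxZ ?invrK //.
by rewrite unitmxZ ?Me_unit // unitfE invr_eq0 gt_eqF.
Qed.

Definition aa (k l : 'I_n) (al : R) := s * N al^-1 k l / (p k ord0 * p l ord0).
Definition a0 (k l : 'I_n) := s * G k l / (p k ord0 * p l ord0).

Lemma rr_eq al k l : 0 < al ->
  rr al k l = (rho + al^-1) / (al^-1 * s) * p k ord0 * p l ord0 * (1 + aa k l al / al).
Proof.
move=> al0; rewrite rr_mat // mxE.
have hY : Y al^-1 k l = N al^-1 k l + (al^-1 * s)^-1 * (p k ord0 * p l ord0).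
  rewrite /N [in RHS]mxE [in RHS]mxE [in RHS]mxE /W mxE big_ord1 mxE; ring.
rewrite hY /aa.
have := hpos k; have := hpos l; have := s_gt0 => hs hl hk.
field; rewrite !gt_eqF //; exact: mulr_gt0.
Qed.

Lemma aa_bound k l : forall al, 2 * mn G + 1 < al ->
  `|aa k l al - a0 k l| <= (s / (p k ord0 * p l ord0) * (2 * mn G ^+ 2)) / al.
Proof.
move=> al hal.
have mG := mn_ge0 G.
have al0 : 0 < al by lra.
have e0 : 0 < al^-1 by rewrite invr_gt0.
have he : al^-1 * mn G <= 2^-1.
  rewrite mulrC ler_pdivrMr //; lra.
have hb := Nbound e0 he k l.
have pp : 0 < p k ord0 * p l ord0 by apply: mulr_gt0.
have -> : aa k l al - a0 k l = s / (p k ord0 * p l ord0) * (N al^-1 k l - G k l).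
  by rewrite /aa /a0; ring.
have sp : 0 < s / (p k ord0 * p l ord0) by rewrite divr_gt0 ?s_gt0.
rewrite normrM (gtr0_norm sp) -mulrA ler_pM2l //.
by apply: le_trans hb _; rewrite mulrC.
Qed.

Lemma F_lim i j :
  (al * (2^-1 * (ln (rr al i i) + ln (rr al j j)) - ln (rr al i j)))
     @[al --> +oo] --> (2^-1 * (a0 i i + a0 j j) - a0 i j).
Proof.
have mG := mn_ge0 G.
have Cge k l : 0 <= s / (p k ord0 * p l ord0) * (2 * mn G ^+ 2).
  apply: mulr_ge0; last by rewrite mulr_ge0 // sqr_ge0.
  by apply: divr_ge0; [exact: ltW s_gt0 | exact: ltW (mulr_gt0 (hpos k) (hpos l))].
have [M1 h1] := term_bound (Cge i i) (aa_bound i i).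
have [M2 h2] := term_bound (Cge j j) (aa_bound j j).
have [M3 h3] := term_bound (Cge i j) (aa_bound i j).
set C1 := (2 * (`|a0 i i| + s / (p i ord0 * p i ord0) * (2 * mn G ^+ 2)) ^+ 2 +
      s / (p i ord0 * p i ord0) * (2 * mn G ^+ 2)) in h1.
set C2 := (2 * (`|a0 j j| + s / (p j ord0 * p j ord0) * (2 * mn G ^+ 2)) ^+ 2 +
      s / (p j ord0 * p j ord0) * (2 * mn G ^+ 2)) in h2.
set C3 := (2 * (`|a0 i j| + s / (p i ord0 * p j ord0) * (2 * mn G ^+ 2)) ^+ 2 +
      s / (p i ord0 * p j ord0) * (2 * mn G ^+ 2)) in h3.
apply: (@cvg_inv_bound _ _ _ (2^-1 * C1 + 2^-1 * C2 + C3)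
   (Num.max M1 (Num.max M2 (Num.max M3 (2 * mn G + 1))))) => al.
rewrite !gt_max => /and4P [hM1 hM2 hM3 hM].
have al0 : 0 < al by lra.
have [p1 b1] := h1 _ hM1; have [p2 b2] := h2 _ hM2; have [p3 b3] := h3 _ hM3.
set Q := (rho + al^-1) / (al^-1 * s).
have Q0 : 0 < Q.
  have := rho_ge0; have := s_gt0; have e0 : 0 < al^-1 by rewrite invr_gt0.
  move=> hs hr; rewrite /Q divr_gt0 ?mulr_gt0 //; lra.
have lnr k l : 0 < 1 + aa k l al / al -> ln (rr al k l) =
    ln Q + ln (p k ord0) + ln (p l ord0) + ln (1 + aa k l al / al).
  move=> hp; rewrite rr_eq // -/Q.
  have hk := hpos k; have hl := hpos l.
  have q2 : Q * p k ord0 \in Num.pos by rewrite posrE; exact: mulr_gt0.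
  have q1 : Q * p k ord0 * p l ord0 \in Num.pos by rewrite posrE; apply: mulr_gt0 => //; rewrite -posrE.
  have q3 : 1 + aa k l al / al \in Num.pos by rewrite posrE.
  by rewrite (lnM q1 q3) (lnM q2) ?posrE // lnM ?posrE.
rewrite (lnr _ _ p1) (lnr _ _ p2) (lnr _ _ p3).
set l1 := ln (1 + aa i i al / al) in b1 *.
set l2 := ln (1 + aa j j al / al) in b2 *.
set l3 := ln (1 + aa i j al / al) in b3 *.
have -> : al * (2^-1 * (ln Q + ln (p i ord0) + ln (p i ord0) + l1 +
      (ln Q + ln (p j ord0) + ln (p j ord0) + l2)) -
      (ln Q + ln (p i ord0) + ln (p j ord0) + l3)) -
      (2^-1 * (a0 i i + a0 j j) - a0 i j) =
   2^-1 * (al * l1 - a0 i i) + 2^-1 * (al * l2 - a0 j j) - (al * l3 - a0 i j).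
  by field.
have -> : (2^-1 * C1 + 2^-1 * C2 + C3) / al = 2^-1 * (C1 / al) + 2^-1 * (C2 / al) + C3 / al.
  by ring.
apply: le_trans (ler_normB _ _) _; apply: lerD; last exact: b3.
apply: le_trans (ler_normD _ _) _; rewrite !normrM ger0_norm ?invr_ge0 //.
by apply: lerD; apply: ler_wpM2l.
Qed.


Lemma main_lim i j : lw_expr A rho i j alpha @[alpha --> +oo]
      --> resistance_distance (reweighted_adjacency A p) i j.
Proof.
have hT := @theta_lim R n n_gt0.
have hF := @F_lim i j.
have hP := cvgM hT hF.
have -> : resistance_distance (reweighted_adjacency A p) i j =
   2 / n%:R * (2^-1 * (a0 i i + a0 j j) - a0 i j).
  rewrite -/Bm res_eq c2E /a0.
  have -> : G j i = G i j by rewrite -{1}Gtr mxE.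
  have := hpos i; have := hpos j; have := s_gt0 => hs hj hi.
  by field; rewrite ?nR0 ?gt_eqF.
apply: (cvg_trans _ (cvgM hT hF)).
apply: near_eq_cvg; near=> al.
have al0 : 0 < al by near: al; apply: nbhs_pinfty_gt; exact: num_real.
rewrite /lw_expr /= -!/(rr al).
by field; rewrite gt_eqF.
Unshelve. all: end_near. Qed.

End Alg.

Unset Implicit Arguments.

Theorem theorem8 (R : realType) (n : nat) (A : 'M[R]_n) (rho : R)
  (p : 'cV[R]_n) :
  (2 <= n)%N ->
  weighted_adjacency A ->
  connected_graph A ->
  is_spectral_radius A rho ->
  is_perron_vector A rho p ->
  forall i j : 'I_n,
    lw_expr A rho i j alpha @[alpha --> +oo]
      --> resistance_distance (reweighted_adjacency A p) i j.
Proof.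
move=> _ [hsym hnn] hconn _ [hAp [hpos _]] i j.
exact: (main_lim hsym hnn hAp hpos hconn i).
Qed.
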